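(* Let $n\ge 3$ and let $K$ be a proper $4$-coloring of $H_2(n,n-1)$. The following are equivalent: (i) there exist $v,w\in\mathcal{N}(0)=\{u\in\mathbb{Z}_2^n:\mathrm{wt}(u)\ge n-1\}$ such that $T(K)=\{(x,y): x+y\in\{v,w\}\}$; (ii) $\mathrm{rb}(K)=\frac{2}{n+1}$; (iii) the transition edges of $K$ tile the graph in $4$-cycles. Moreover, if one (hence each) of these holds, then the coloring of a single $4$-cycle of transition edges uniquely determines the coloring of the entire graph: if $K'$ is another proper $4$-coloring satisfying these conditions, $C$ is a $4$-cycle whose edges are transition edges for both $K$ and $K'$, and $K$ and $K'$ agree on the vertices of $C$, then $K=K'$.
   Context: $H_2(n,n-1)$ is the simple undirected graph with vertex set $\mathbb{Z}_2^n$ in which $x,y$ are adjacent iff their Hamming distance is at least $n-1$; $\mathrm{wt}$ is Hamming weight. For a simple graph $G=(V,E)$ and a proper $k$-coloring $K$, an edge $(x,y)\in E$ is a transition edge for $K$ if swapping the colors of $x$ and $y$ (all other colors unchanged) yields again a proper $k$-coloring; $T(K)$ is the set of transition edges and $\mathrm{rb}(K)=|T(K)|/|E|$ is the robustness. A set $M$ of edges tiles the graph in $4$-cycles if $M$ is the union of pairwise vertex-disjoint and edge-disjoint $4$-cycles and every vertex lies on exactly one of these cycles. *)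

(* Defs.v *)
From mathcomp Require Import all_boot all_order all_algebra.
Set Implicit Arguments. Unset Strict Implicit. Unset Printing Implicit Defensive.

Section Graphs.
Variable T : finType.
Variable r : rel T.

Definition edges : {set {set T}} := [set e : {set T} | [exists x, exists y, r x y && (e == [set x; y])]].

Definition proper_col (k : nat) (K : {ffun T -> 'I_k}) : bool :=
  [forall x, forall y, r x y ==> (K x != K y)].

Definition swap_col (k : nat) (K : {ffun T -> 'I_k}) (x y : T) : {ffun T -> 'I_k} :=
  [ffun z => if z == x then K y else if z == y then K x else K z].

Definition is_transition (k : nat) (K : {ffun T -> 'I_k}) (x y : T) : bool :=
  r x y && proper_col (swap_col K x y).

Definition trans_edges (k : nat) (K : {ffun T -> 'I_k}) : {set {set T}} :=
  [set e : {set T} | [exists x, exists y, is_transition K x y && (e == [set x; y])]].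

Definition rb (k : nat) (K : {ffun T -> 'I_k}) : rat :=
  (#|trans_edges K|%:R / #|edges|%:R)%R.

Definition cyc4 (a b c d : T) : {set {set T}} :=
  [set [set a; b]; [set b; c]; [set c; d]; [set d; a]].

Definition is_4cycle (C : {set {set T}}) : Prop :=
  exists a b c d : T, [/\ uniq [:: a; b; c; d],
    [&& r a b, r b c, r c d & r d a] & C = cyc4 a b c d].

Definition verts (C : {set {set T}}) : {set T} := \bigcup_(e in C) e.

Definition tiles_in_4cycles (M : {set {set T}}) : Prop :=
  exists F : {set {set {set T}}},
    [/\ forall C, C \in F -> is_4cycle C,
        M = \bigcup_(C in F) C,
        forall C1 C2, C1 \in F -> C2 \in F -> C1 != C2 ->
          [disjoint verts C1 & verts C2] /\ [disjoint C1 & C2]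
      & forall x : T, #|[set C in F | x \in verts C]| = 1%N].

End Graphs.

Definition V (n : nat) := {ffun 'I_n -> bool}.

Definition vadd (n : nat) (x y : V n) : V n := [ffun i => x i (+) y i].

Definition wt (n : nat) (x : V n) : nat := #|[set i | x i]|.
Definition hdist (n : nat) (x y : V n) : nat := #|[set i | x i != y i]|.

Definition H2 (n : nat) : rel (V n) := fun x y => (n.-1 <= hdist x y)%N.

Definition N0 (n : nat) : {set V n} := [set u : V n | (n.-1 <= wt u)%N].
Arguments H2 n x y : clear implicits.
Arguments N0 n : clear implicits.

(* Main.v *)
Require Import Defs.
From mathcomp Require Import all_boot all_order all_algebra.
Set Implicit Arguments. Unset Strict Implicit. Unset Printing Implicit Defensive.

Ltac vt := apply/ffunP => ?; rewrite !ffunE;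
  repeat match goal with |- context [fun_of_fin ?f ?j] => case: (fun_of_fin f j) end;
  try done.

Section Vec.
Variable n : nat.
Implicit Types x y z u v w g : V n.

Definition v0 : V n := [ffun _ => false].
Definition vone : V n := [ffun _ => true].
Definition ve (i : 'I_n) : V n := [ffun j => j == i].


Lemma vaddC x y : vadd x y = vadd y x. Proof. by vt. Qed.
Lemma vaddA x y z : vadd x (vadd y z) = vadd (vadd x y) z. Proof. by vt. Qed.
Lemma vaddK x y : vadd (vadd x y) y = x. Proof. by vt. Qed.
Lemma vaddKl x y : vadd x (vadd x y) = y. Proof. by vt. Qed.
Lemma vaddAC x y z : vadd (vadd x y) z = vadd (vadd x z) y. Proof. by vt. Qed.
Lemma vadd0 x : vadd x v0 = x. Proof. by vt. Qed.
Lemma vaddxx x : vadd x x = v0. Proof. by vt. Qed.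
Lemma vadd_inj x : injective (vadd x).
Proof. by move=> y z E; rewrite -(vaddKl x y) E vaddKl. Qed.
Lemma vadd_eq0 x y : (vadd x y == x) = (y == v0).
Proof. by rewrite -{2}(vadd0 x) (inj_eq (@vadd_inj x)). Qed.
Lemma vadd_eq x y z : (vadd x y == z) = (y == vadd x z).
Proof. by apply/eqP/eqP => [<-|->]; rewrite ?vaddKl. Qed.

Lemma hdistE x y : hdist x y = wt (vadd x y).
Proof. by rewrite /hdist /wt; apply: eq_card => i; rewrite !inE ffunE; case: (x i); case: (y i). Qed.

Lemma H2E x y : H2 n x y = (vadd x y \in N0 n).
Proof. by rewrite /H2 hdistE inE. Qed.

Lemma H2_sym x y : H2 n x y = H2 n y x.
Proof. by rewrite !H2E vaddC. Qed.

Lemma wt0 : wt v0 = 0.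
Proof. by apply/eqP; rewrite cards_eq0; apply/eqP/setP=> i; rewrite !inE ffunE. Qed.

Hypothesis hn : 3 <= n.

Lemma N0_neq0 g : g \in N0 n -> g != v0.
Proof. rewrite inE; apply: contraL => /eqP ->; rewrite wt0 -ltnNge; by case: n hn => [|[|m]]. Qed.

Lemma H2_irr x : ~~ H2 n x x.
Proof. by rewrite H2E vaddxx; apply/negP => /N0_neq0; rewrite eqxx. Qed.

Lemma H2_neq x y : H2 n x y -> x != y.
Proof. by apply: contraL => /eqP ->; apply: H2_irr. Qed.

Lemma H2_add x g : H2 n x (vadd x g) = (g \in N0 n).
Proof. by rewrite H2E vaddKl. Qed.

End Vec.

Section Card.
Variable n : nat.
Implicit Types x y z u v w g : V n.

Definition vc (i : 'I_n) : V n := [ffun j => j != i].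

Lemma vc_inj : injective vc.
Proof. move=> i j /ffunP/(_ i); rewrite !ffunE eqxx => /esym/negbFE/eqP->//. Qed.

Lemma N0E : N0 n = vone n |: [set vc i | i in 'I_n].
Proof.
apply/setP => u; rewrite !inE; apply/idP/idP.
- move=> hu; case: (boolP [forall i, u i]) => [/forallP hall|].
    by apply/orP; left; apply/eqP/ffunP => i; rewrite ffunE hall.
  rewrite negb_forall => /existsP [i hi]; apply/orP; right; apply/imsetP; exists i => //.
  have sub : [set j | u j] \subset [set~ i].
    by apply/subsetP => j; rewrite !inE; apply: contraTneq => ->.
  have : [set j | u j] == [set~ i].
    by rewrite eqEcard sub cardsC1 card_ord.
  move/eqP => E; apply/ffunP => j; rewrite ffunE.
  by move/setP: E => /(_ j); rewrite !inE.
- case/orP => [/eqP ->|/imsetP [i _ ->]].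
    by rewrite /wt (_ : [set i | vone n i] = setT) ?cardsT ?card_ord ?leq_pred //; apply/setP=> i; rewrite !inE ffunE.
  rewrite /wt (_ : [set j | vc i j] = [set~ i]) ?cardsC1 ?card_ord //.
  by apply/setP => j; rewrite !inE ffunE.
Qed.

Lemma card_N0 : #|N0 n| = n.+1.
Proof.
rewrite N0E cardsU1 card_imset ?card_ord; last exact: vc_inj.
suff -> : vone n \notin [set vc i | i in 'I_n] by [].
by apply/imsetP => [[i _ /ffunP/(_ i)]]; rewrite !ffunE eqxx.
Qed.

Lemma card_nbr x : #|[set y | H2 n x y]| = n.+1.
Proof.
rewrite -card_N0 -(card_imset (N0 n) (@vadd_inj n x)); apply: eq_card => y.
rewrite !inE H2E; apply/idP/imsetP => [h|[g hg ->]]; last by rewrite vaddKl.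
by exists (vadd x y) => //; rewrite vaddKl.
Qed.

End Card.

Lemma set2_eqP (T : finType) (a b c d : T) : a != b ->
  [set a; b] = [set c; d] -> (a = c /\ b = d) \/ (a = d /\ b = c).
Proof.
move=> hab E.
have ha : a \in [set c; d] by rewrite -E set21.
have hb : b \in [set c; d] by rewrite -E set22.
have hc : c \in [set a; b] by rewrite E set21.
have hd : d \in [set a; b] by rewrite E set22.
move: ha hb hc hd; rewrite !inE.
case/orP=> /eqP ea; case/orP=> /eqP eb; subst; rewrite ?eqxx in hab => //; try by left.
by right.
Qed.

Section Count.
Variable T : finType.
Variable r : rel T.
Hypothesis rsym : forall x y, r x y = r y x.
Hypothesis rirr : forall x, ~~ r x x.

Let E := [set e : {set T} | [exists x, exists y, r x y && (e == [set x; y])]].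

Lemma r_neq x y : r x y -> x != y.
Proof. by apply: contraL => /eqP ->; apply: rirr. Qed.

Lemma deg_edges x : #|[set y | r x y]| = #|[set e in E | x \in e]|.
Proof.
have -> : [set e in E | x \in e] = [set [set x; y] | y in [set y | r x y]].
  apply/setP => e; rewrite !inE; apply/andP/imsetP.
  - case=> /existsP [a /existsP [b /andP [hab /eqP ->]]]; rewrite !inE.
    case/orP=> /eqP ea; subst x; first by exists b; rewrite ?inE.
    by exists a; rewrite ?inE 1?rsym // setUC.
  - case=> y; rewrite inE => hy ->; split; last by rewrite set21.
    by apply/existsP; exists x; apply/existsP; exists y; rewrite hy eqxx.
rewrite card_in_imset // => y1 y2; rewrite !inE => h1 h2 Ey.
have := set2_eqP (r_neq h1) Ey; case=> [[_ ->]|[e1 e2]] //.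
by move: (r_neq h1); rewrite e2 eqxx.
Qed.

Lemma sum_deg : \sum_x #|[set y | r x y]| = 2 * #|E|.
Proof.
have step x : #|[set e in E | x \in e]| = \sum_(e in E) (x \in e).
  rewrite -sum1_card (eq_bigl (fun e => (e \in E) && (x \in e))); last by move=> e; rewrite !inE.
  by rewrite big_mkcondr /=; apply: eq_bigr => e _; case: (x \in e).
under eq_bigr => x _ do rewrite deg_edges step.
rewrite exchange_big /=.
rewrite (eq_bigr (fun _ => 2)).
  by rewrite sum_nat_const mulnC.
move=> e; rewrite inE => /existsP [a /existsP [b /andP [hab /eqP ->]]].
transitivity #|[set a; b]|; last by rewrite cards2 (r_neq hab).
rewrite -sum1_card [RHS]big_mkcond /=; apply: eq_bigr => y _; by case: (y \in _).
Qed.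

End Count.

Lemma no5 (a b c d e : 'I_4) : a != b -> a != c -> a != d -> a != e -> b != c ->
  b != d -> b != e -> c != d -> c != e -> d != e -> False.
Proof.
move=> ab ac ad ae bc bd be cd ce de.
have u : uniq [:: a; b; c; d; e] by rewrite /= !inE !negb_or ab ac ad ae bc bd be cd ce de.
have := max_card [pred x in [:: a; b; c; d; e]]; rewrite card_ord.
by move/card_uniqP: u => ->.
Qed.

Lemma Q4 (a b c p q : 'I_4) : a != b -> a != c -> b != c ->
  p != a -> p != b -> p != c -> q != a -> q != b -> q != c -> p = q.
Proof.
move=> ab ac bc pa pb pc qa qb qc; apply/eqP/negP => /negP pq.
by apply: (no5 ab ac _ _ bc _ _ _ _ pq); rewrite eq_sym.
Qed.

Lemma exists_outside (T : finType) (A : {set T}) (s : seq T) :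
  size s < #|A| -> exists z, z \in A /\ z \notin s.
Proof.
move=> h; case: (boolP (A \subset [set x in s])) => [sub|].
  have := subset_leq_card sub; rewrite cardsE => h2.
  have := leq_trans h2 (card_size s); by rewrite leqNgt h.
by case/subsetPn => z hz hn; exists z; move: hn; rewrite inE.
Qed.

Section Trans.
Variable n : nat.
Hypothesis hn : 3 <= n.
Variable L : {ffun V n -> 'I_4}.
Hypothesis hL : proper_col (H2 n) L.
Implicit Types x y z u v w g : V n.

Notation tr := (is_transition (H2 n) L).

Lemma adjP x y : H2 n x y -> L x != L y.
Proof. by move=> h; move/forallP: hL => /(_ x) /forallP /(_ y) /implyP; apply. Qed.

Lemma swap_sym x y : swap_col L x y = swap_col L y x.
Proof.
apply/ffunP => z; rewrite !ffunE.
case hx: (z == x); case hy: (z == y) => //=.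
by move/eqP: hx => <-; move/eqP: hy => <-.
Qed.

Lemma tr_sym x y : tr x y = tr y x.
Proof. by rewrite /is_transition H2_sym swap_sym. Qed.

Lemma tr_adj x y : tr x y -> H2 n x y.
Proof. by case/andP. Qed.

Lemma trA x y z : tr x y -> H2 n y z -> z != x -> L z != L x.
Proof.
case/andP => hxy /forallP /(_ y) /forallP /(_ z) /implyP hp hyz hzx.
have := hp hyz; rewrite !ffunE.
have hyx : (y == x) = false by apply/negbTE; rewrite eq_sym H2_neq.
have hzy : (z == y) = false by apply/negbTE; rewrite eq_sym H2_neq.
by rewrite hyx eqxx (negbTE hzx) hzy eq_sym.
Qed.

Definition tset x := [set y | tr x y].

Lemma tdeg_le2 x : #|tset x| <= 2.
Proof.
rewrite leqNgt; apply/negP => h3.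
have [y1 [h1 _]] := @exists_outside _ (tset x) [::] (ltnW (ltnW h3)).
have [y2 [h2 n2]] := @exists_outside _ (tset x) [:: y1] (ltnW h3).
have [y3 [h3' n3]] := @exists_outside _ (tset x) [:: y1; y2] h3.
have : size [:: y1; y2; y3] < #|[set y | H2 n x y]| by rewrite card_nbr.
case/exists_outside => z [hz nz].
move: h1 h2 h3' hz n2 n3 nz; rewrite !inE !negb_or => h1 h2 h3' hz n2 /andP[n31 n32] /and3P[nz1 nz2 nz3].
have t1 : tr y1 x by rewrite tr_sym.
have t2 : tr y2 x by rewrite tr_sym.
have t3 : tr y3 x by rewrite tr_sym.
apply: (@no5 (L x) (L y1) (L y2) (L y3) (L z)).
- exact: adjP (tr_adj h1).
- exact: adjP (tr_adj h2).
- exact: adjP (tr_adj h3').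
- exact: adjP hz.
- by rewrite eq_sym; apply: (trA t1 (tr_adj h2) n2).
- by rewrite eq_sym; apply: (trA t1 (tr_adj h3') n31).
- by rewrite eq_sym; apply: (trA t1 hz nz1).
- by rewrite eq_sym; apply: (trA t2 (tr_adj h3') n32).
- by rewrite eq_sym; apply: (trA t2 hz nz2).
- by rewrite eq_sym; apply: (trA t3 hz nz3).
Qed.

Lemma nonTr_same x z z' : #|tset x| = 2 -> H2 n x z -> H2 n x z' ->
  ~~ tr x z -> ~~ tr x z' -> L z = L z'.
Proof.
move=> /eqP /cards2P [t1 [t2 [ne E]]] hz hz' nz nz'.
have ht1 : tr x t1 by have := set21 t1 t2; rewrite -E inE.
have ht2 : tr x t2 by have := set22 t1 t2; rewrite -E inE.
have t1x : tr t1 x by rewrite tr_sym.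
have t2x : tr t2 x by rewrite tr_sym.
have zt z0 : ~~ tr x z0 -> (z0 != t1) && (z0 != t2).
  by apply: contraR; rewrite negb_and !negbK => /orP [] /eqP ->.
have /andP [z1 z2] := zt _ nz.
have /andP [z1' z2'] := zt _ nz'.
apply: (@Q4 (L x) (L t1) (L t2)).
- exact: adjP (tr_adj ht1).
- exact: adjP (tr_adj ht2).
- by rewrite eq_sym; apply: (trA t1x (tr_adj ht2)); rewrite eq_sym.
- by rewrite eq_sym; apply: adjP.
- exact: (trA t1x hz).
- exact: (trA t2x hz).
- by rewrite eq_sym; apply: adjP.
- exact: (trA t1x hz').
- exact: (trA t2x hz').
Qed.

End Trans.


Section Reach.
Variable n : nat.
Implicit Types x y z u v w g : V n.

Lemma vadd0l x : vadd (v0 n) x = x. Proof. by vt. Qed.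

Lemma vaddAA_eq x g u : (vadd (vadd x g) u == x) = (g == u).
Proof. by rewrite -vaddA vadd_eq0 vadd_eq vadd0 eq_sym. Qed.

Lemma vone_N0 : vone n \in N0 n. Proof. by rewrite N0E setU11. Qed.
Lemma vc_N0 i : vc i \in N0 n. Proof. by rewrite N0E setU1r // imset_f. Qed.

Lemma reach (Q : V n -> Prop) :
  (forall x g, g \in N0 n -> Q x -> Q (vadd x g)) -> forall x0, Q x0 -> forall x, Q x.
Proof.
move=> hc x0 q0 x.
have stepe i x1 : Q x1 -> Q (vadd x1 (ve i)).
  move=> q; have -> : vadd x1 (ve i) = vadd (vadd x1 (vone n)) (vc i).
    by apply/ffunP => j; rewrite !ffunE; case: (x1 j); case: (j == i).
  exact: (hc _ _ (vc_N0 i) (hc _ _ vone_N0 q)).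
suff H : forall m y, wt y <= m -> forall x1, Q x1 -> Q (vadd x1 y).
  by have := H _ (vadd x0 x) (leqnn _) _ q0; rewrite vaddKl.
elim=> [|m IH] y hy x1 q.
  have -> : y = v0 n.
    move: hy; rewrite leqn0 /wt cards_eq0 => /eqP /setP E; apply/ffunP => j.
    by move: (E j); rewrite !inE ffunE => ->.
  by rewrite vadd0.
case: (posnP (wt y)) => [w0|].
  have -> : y = v0 n.
    move: w0; rewrite /wt => /eqP; rewrite cards_eq0 => /eqP /setP E; apply/ffunP => j.
    by move: (E j); rewrite !inE ffunE => ->.
  by rewrite vadd0.
case/card_gt0P => i; rewrite inE => hi.
have hy' : wt (vadd y (ve i)) <= m.
  have : wt y = 1 + wt (vadd y (ve i)).
    rewrite /wt (cardsD1 i) inE hi; congr (_ + _); apply: eq_card => j.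
    rewrite !inE !ffunE; case: (eqVneq j i) => [->|_]; by rewrite ?hi ?addbF /=.
  by move=> E; move: hy; rewrite E.
have := IH _ hy' _ (stepe i _ q).
have -> // : vadd (vadd x1 (ve i)) (vadd y (ve i)) = vadd x1 y.
by apply/ffunP => j; rewrite !ffunE; case: (x1 j); case: (y j); case: (j == i).
Qed.

End Reach.

Section Struct.
Variable n : nat.
Hypothesis hn : 3 <= n.
Variable L : {ffun V n -> 'I_4}.
Hypothesis hL : proper_col (H2 n) L.
Implicit Types x y z u v w g : V n.

Notation tr := (is_transition (H2 n) L).

Definition Pt v w x := forall y, tr x y = (vadd x y == v) || (vadd x y == w).

Lemma Pt_sym v w x : Pt v w x -> Pt w v x.
Proof. by move=> h y; rewrite h orbC. Qed.

Lemma tset_eq x a b : #|tset L x| = 2 -> tr x a -> tr x b -> a != b ->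
  forall y, tr x y = (y == a) || (y == b).
Proof.
move=> h2 ha hb ab.
have : [set a; b] == tset L x.
  rewrite eqEcard h2 cards2 ab andbT; apply/subsetP => y; rewrite !inE.
  by case/orP => /eqP ->.
move/eqP/setP => E y; move: (E y); rewrite !inE => <-//.
Qed.

Hypothesis hall : forall x, #|tset L x| = 2.

Lemma step_g v w x g : Pt v w x -> g \in N0 n -> g != v -> g != w ->
  Pt v w (vadd x g).
Proof.
move=> hP hg gv gw.
set y := vadd x g.
have hyx : H2 n y x by rewrite H2_sym H2_add.
have nyx : ~~ tr y x by rewrite tr_sym hP /y vaddKl (negbTE gv) (negbTE gw).
have claim u : u \in N0 n -> (u == v) || (u == w) -> g != u -> tr y (vadd y u).
  move=> hu huvw gu; apply/negPn/negP => nt.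
  have hyu : H2 n y (vadd y u) by rewrite H2_add.
  have E := nonTr_same hn hL (hall y) hyu hyx nt nyx.
  have txu : tr x (vadd x u) by rewrite hP vaddKl.
  have h1 : H2 n (vadd x u) (vadd y u).
    rewrite H2E (_ : vadd (vadd x u) (vadd y u) = g) //.
    by rewrite /y; apply/ffunP => j; rewrite !ffunE; case: (x j); case: (g j); case: (u j).
  have h2 : vadd y u != x by rewrite /y vaddAA_eq.
  by move: (trA hn txu h1 h2); rewrite E eqxx.
have hv : v \in N0 n.
  have := hP (vadd x v); rewrite vaddKl eqxx /= => /tr_adj.
  by rewrite H2_add.
have hw : w \in N0 n.
  have := hP (vadd x w); rewrite vaddKl eqxx orbT => /tr_adj.
  by rewrite H2_add.
have t1 : tr y (vadd y v) by apply: claim => //; rewrite eqxx.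
have t2 : tr y (vadd y w) by apply: claim => //; rewrite eqxx orbT.
case: (eqVneq v w) => [evw|nvw].
  exfalso; have := hall x.
  have -> : tset L x = [set vadd x v].
    apply/setP => z; rewrite !inE hP -evw orbb vadd_eq //.
  by rewrite cards1.
have ne : vadd y v != vadd y w by rewrite (inj_eq (@vadd_inj _ y)).
move=> z; rewrite (tset_eq (hall y) t1 t2 ne z).
by rewrite -!vadd_eq.
Qed.

Lemma Pt_N0 v w x : Pt v w x -> (v \in N0 n) && (w \in N0 n) && (v != w).
Proof.
move=> hP.
have hv : v \in N0 n.
  have := hP (vadd x v); rewrite vaddKl eqxx /= => /tr_adj.
  by rewrite H2_add.
have hw : w \in N0 n.
  have := hP (vadd x w); rewrite vaddKl eqxx orbT => /tr_adj.
  by rewrite H2_add.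
rewrite hv hw /=; apply/negP => /eqP evw.
have := hall x.
have -> : tset L x = [set vadd x v].
  by apply/setP => z; rewrite !inE hP -evw orbb vadd_eq.
by rewrite cards1.
Qed.

End Struct.

Section Struct2.
Variable n : nat.
Hypothesis hn : 3 <= n.
Variable L : {ffun V n -> 'I_4}.
Hypothesis hL : proper_col (H2 n) L.
Implicit Types x y z u v w g : V n.
Notation tr := (is_transition (H2 n) L).
Hypothesis hall : forall x, #|tset L x| = 2.

Lemma step_v v w x : Pt L v w x -> Pt L v w (vadd x v).
Proof.
move=> hP.
have /andP [/andP [hv hw] nvw] := Pt_N0 hall hP.
set x' := vadd x v.
have txx' : tr x x' by rewrite hP /x' vaddKl eqxx.
have tx'x : tr x' x by rewrite tr_sym.
have ne1 : x != vadd x' w by rewrite eq_sym /x' vaddAA_eq.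
case: (boolP (tr x' (vadd x' w))) => h.
  move=> y; rewrite (tset_eq (hall x') tx'x h ne1 y).
  by rewrite -(vadd_eq x' y w) {1}/x' -{1}(vaddK x v) -vadd_eq.
have /eqP /cards2P [t1 [t2 [nt E]]] := hall x'.
have : size [:: t1; t2; vadd x' w] < #|[set y | H2 n x' y]|.
  by rewrite card_nbr.
case/exists_outside => z [hz nz]; rewrite inE in hz.
move: nz; rewrite !inE !negb_or => /and3P [z1 z2 z3].
have xin : x \in [set t1; t2] by rewrite -E inE.
have zx : z != x.
  by apply/eqP => ezx; move: xin; rewrite -ezx !inE (negbTE z1) (negbTE z2).
have ntz : ~~ tr x' z.
  have : z \notin tset L x' by rewrite E !inE (negbTE z1) (negbTE z2).
  by rewrite inE.
have hx'w : H2 n x' (vadd x' w) by rewrite H2_add.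
have Ez := nonTr_same hn hL (hall x') hz hx'w ntz h.
have txw : tr x (vadd x w) by rewrite hP vaddKl eqxx orbT.
have twx : tr (vadd x w) x by rewrite tr_sym.
have hxzv : H2 n x (vadd z v).
  rewrite H2E (_ : vadd x (vadd z v) = vadd x' z) -?H2E //.
  by rewrite /x'; apply/ffunP => j; rewrite !ffunE; case: (x j); case: (z j); case: (v j).
have hxv : H2 n x x' by rewrite H2_add.
have hxw : H2 n x (vadd x w) by rewrite H2_add.
exfalso; apply: (@no5 (L x) (L x') (L (vadd x w)) (L (vadd z v)) (L z)).
- exact: adjP.
- exact: adjP.
- exact: adjP.
- by rewrite eq_sym; apply: (trA hn txx' hz zx).
- rewrite eq_sym; apply: (trA hn tx'x hxw).
  by rewrite /x' (inj_eq (@vadd_inj _ x)) eq_sym.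
- rewrite eq_sym; apply: (trA hn tx'x hxzv).
  by rewrite /x'; apply: contra zx => /eqP /(congr1 (fun t => vadd t v)); rewrite !vaddK => ->.
- exact: adjP.
- rewrite eq_sym; apply: (trA hn twx hxzv).
  apply: contra z3 => /eqP /(congr1 (fun t => vadd t v)); rewrite vaddK => ->.
  by rewrite /x' vaddAC.
- rewrite Ez; apply: (adjP hL); rewrite H2E (_ : vadd (vadd x w) (vadd x' w) = v) //.
  by rewrite /x'; apply/ffunP => j; rewrite !ffunE; case: (x j); case: (w j); case: (v j).
- by apply: (adjP hL); rewrite H2_sym H2_add hv.
Qed.

Lemma Pt_step v w x g : g \in N0 n -> Pt L v w x -> Pt L v w (vadd x g).
Proof.
move=> hg hP.
case: (eqVneq g v) => [->|gv]; first exact: step_v.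
case: (eqVneq g w) => [->|gw]; first by apply: Pt_sym; apply: step_v; apply: Pt_sym.
exact: step_g.
Qed.

Lemma structure : exists v w, [/\ v \in N0 n, w \in N0 n, v != w & forall x, Pt L v w x].
Proof.
have /eqP /cards2P [t1 [t2 [nt E]]] := hall (v0 n).
have hP : Pt L t1 t2 (v0 n).
  move=> y; rewrite vadd0l.
  have : (y \in tset L (v0 n)) = (y \in [set t1; t2]) by rewrite E.
  by rewrite !inE.
have /andP [/andP [h1 h2] h3] := Pt_N0 hall hP.
exists t1, t2; split => //.
by apply: (reach (Q := Pt L t1 t2)) hP => x g hg; apply: Pt_step.
Qed.

End Struct2.

Import GRing.Theory Num.Theory.

Section Counts.
Variable n : nat.
Hypothesis hn : 3 <= n.
Implicit Types x y z u v w g : V n.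

Lemma edges_count : 2 * #|edges (H2 n)| = #|V n| * n.+1.
Proof.
rewrite /edges -(sum_deg (@H2_sym n) (H2_irr hn)).
under eq_bigr => x _ do rewrite card_nbr.
by rewrite sum_nat_const.
Qed.

Variable L : {ffun V n -> 'I_4}.
Hypothesis hL : proper_col (H2 n) L.
Notation tr := (is_transition (H2 n) L).

Lemma tr_irr x : ~~ tr x x.
Proof. by apply/negP => /tr_adj; apply/negP; apply: H2_irr. Qed.

Lemma trans_count : 2 * #|trans_edges (H2 n) L| = \sum_x #|tset L x|.
Proof.
rewrite /trans_edges /tset.
by rewrite -(sum_deg (r := tr) (@tr_sym n L) tr_irr).
Qed.

Lemma sum_le : \sum_x #|tset L x| <= \sum_(x : V n) 2 ?= iff [forall (x | true), #|tset L x| == 2].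
Proof. by apply: leqif_sum => x _; apply: leqif_eq; apply: tdeg_le2. Qed.

Lemma sum2 : \sum_(x : V n) 2 = 2 * #|V n|.
Proof. by rewrite sum_nat_const mulnC. Qed.

Lemma full_hall : #|trans_edges (H2 n) L| = #|V n| -> forall x, #|tset L x| = 2.
Proof.
move=> h x.
have := (sum_le).2; rewrite -trans_count sum2 h eqxx => /esym /forallP /(_ x) /=.
by move/eqP.
Qed.

Lemma Pt_card v w : v != w -> (forall x, Pt L v w x) -> forall x, #|tset L x| = 2.
Proof.
move=> nvw hP x.
have -> : tset L x = [set vadd x v; vadd x w].
  by apply/setP => y; rewrite !inE hP -!vadd_eq.
by rewrite cards2 (inj_eq (@vadd_inj _ x)) nvw.
Qed.

Lemma hall_full : (forall x, #|tset L x| = 2) -> #|trans_edges (H2 n) L| = #|V n|.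
Proof.
move=> h; apply/eqP; rewrite -(eqn_pmul2l (isT : 0 < 2)) trans_count -sum2.
by rewrite (eq_bigr (fun _ => 2)) // => x _; rewrite h.
Qed.

Lemma rb_iff : rb (H2 n) L = (2%:R / n.+1%:R)%R <-> #|trans_edges (H2 n) L| = #|V n|.
Proof.
have N0 : 0 < #|V n| by apply/card_gt0P; exists (v0 n).
have E0 : (#|edges (H2 n)|%:R != 0 :> rat)%R.
  rewrite pnatr_eq0 -lt0n -(ltn_pmul2l (isT : 0 < 2)) edges_count muln0.
  by rewrite muln_gt0 N0.
have n0 : (n.+1%:R != 0 :> rat)%R by rewrite pnatr_eq0.
rewrite /rb; split.
- move/eqP; rewrite eqr_div // -!natrM eqr_nat edges_count => /eqP h.
  by apply/eqP; rewrite -(eqn_pmul2r (ltn0Sn n)) h.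
- move=> h; apply/eqP; rewrite eqr_div // -!natrM eqr_nat edges_count h.
  by [].
Qed.

End Counts.


Lemma set2C (T : finType) (a b : T) : [set a; b] = [set b; a].
Proof. exact: setUC. Qed.

Lemma in_cyc4 (T : finType) (a b c d : T) e :
  (e \in cyc4 a b c d) = [|| e == [set a; b], e == [set b; c], e == [set c; d] | e == [set d; a]].
Proof. by rewrite /cyc4 !inE !orbA. Qed.

Lemma in_verts4 (T : finType) (a b c d y : T) :
  (y \in verts (cyc4 a b c d)) = (y \in [:: a; b; c; d]).
Proof.
rewrite /verts; apply/bigcupP/idP.
- case=> e; rewrite in_cyc4 !inE.
  by case/or4P => /eqP -> ; rewrite !inE => /orP [] /eqP ->; rewrite eqxx ?orbT.
- rewrite !inE; case/or4P => /eqP ->.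
  + by exists [set a; b]; rewrite ?in_cyc4 ?eqxx ?orbT // set21.
  + by exists [set b; c]; rewrite ?in_cyc4 ?eqxx ?orbT // set21.
  + by exists [set c; d]; rewrite ?in_cyc4 ?eqxx ?orbT // set21.
  + by exists [set d; a]; rewrite ?in_cyc4 ?eqxx ?orbT // set21.
Qed.

Lemma set2_neq (T : finType) (x y z w : T) : x \notin [set z; w] -> [set x; y] != [set z; w].
Proof. by apply: contra => /eqP <-; rewrite set21. Qed.

Lemma set2_neq' (T : finType) (x y z w : T) : y \notin [set z; w] -> [set x; y] != [set z; w].
Proof. by apply: contra => /eqP <-; rewrite set22. Qed.

Lemma card_cyc4 (T : finType) (a b c d : T) : uniq [:: a; b; c; d] ->
  #|cyc4 a b c d| = 4 /\ #|verts (cyc4 a b c d)| = 4.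
Proof.
move=> u; split.
- have -> : #|cyc4 a b c d| = #|[:: [set a; b]; [set b; c]; [set c; d]; [set d; a]]|.
    by apply: eq_card => e; rewrite in_cyc4 !inE.
  apply/card_uniqP; move: (u); rewrite /= !inE !negb_or => /andP [/and3P [ab ac ad] /andP [/andP [bc bd] /andP [cd _]]].
  have ba : b != a by rewrite eq_sym.
  have ca : c != a by rewrite eq_sym.
  have da : d != a by rewrite eq_sym.
  have cb : c != b by rewrite eq_sym.
  have db : d != b by rewrite eq_sym.
  have dc : d != c by rewrite eq_sym.
  rewrite ?andbT.
  repeat (apply/andP; split);
  first [ apply: set2_neq; by rewrite !inE negb_or ?ab ?ac ?ad ?bc ?bd ?cd ?ba ?ca ?da ?cb ?db ?dc
        | apply: set2_neq'; by rewrite !inE negb_or ?ab ?ac ?ad ?bc ?bd ?cd ?ba ?ca ?da ?cb ?db ?dc ].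
- rewrite (eq_card (in_verts4 a b c d)).
  by move/card_uniqP: u.
Qed.

Ltac cse e A B C D := case: (e == A); case: (e == B); case: (e == C); case: (e == D).

Lemma cyc4_1 (T : finType) (a b c d : T) : cyc4 b a d c = cyc4 a b c d.
Proof.
apply/setP => e; rewrite !in_cyc4 (set2C b a) (set2C a d) (set2C d c) (set2C c b).
by cse e [set a; b] [set b; c] [set c; d] [set d; a].
Qed.

Lemma cyc4_2 (T : finType) (a b c d : T) : cyc4 c d a b = cyc4 a b c d.
Proof.
apply/setP => e; rewrite !in_cyc4.
by cse e [set a; b] [set b; c] [set c; d] [set d; a].
Qed.

Lemma cyc4_3 (T : finType) (a b c d : T) : cyc4 d c b a = cyc4 a b c d.
Proof.
apply/setP => e; rewrite !in_cyc4 (set2C b a) (set2C a d) (set2C d c) (set2C c b).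
by cse e [set a; b] [set b; c] [set c; d] [set d; a].
Qed.

Section Cond.
Variable n : nat.
Hypothesis hn : 3 <= n.
Variable L : {ffun V n -> 'I_4}.
Hypothesis hL : proper_col (H2 n) L.
Implicit Types x y z u v w g : V n.
Notation tr := (is_transition (H2 n) L).

Definition RHSset v w := [set e : {set V n} | [exists x : V n, exists y : V n,
           ((vadd x y == v) || (vadd x y == w)) && (e == [set x; y])]].

Lemma in_trans a b : a != b -> ([set a; b] \in trans_edges (H2 n) L) = tr a b.
Proof.
move=> ab; rewrite inE; apply/existsP/idP.
- case=> x /existsP [y /andP [hxy /eqP E]].
  by case: (set2_eqP ab E) => [[-> ->]|[-> ->]] //; rewrite tr_sym.
- by move=> h; exists a; apply/existsP; exists b; rewrite h eqxx.
Qed.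

Lemma condi_good v w : v \in N0 n -> w \in N0 n ->
  trans_edges (H2 n) L = RHSset v w -> forall x, Pt L v w x.
Proof.
move=> hv hw E x y.
case: (eqVneq x y) => [<-|xy].
  rewrite vaddxx (negbTE (tr_irr hn L x)).
  by rewrite !(eq_sym (v0 n)) (negbTE (N0_neq0 hn hv)) (negbTE (N0_neq0 hn hw)).
rewrite -in_trans // E inE; apply/existsP/idP.
- case=> a /existsP [b /andP [hab /eqP E2]].
  by case: (set2_eqP xy E2) => [[-> ->]|[-> ->]] //; rewrite vaddC.
- by move=> h; exists x; apply/existsP; exists y; rewrite h eqxx.
Qed.

Lemma good_condi v w : (forall x, Pt L v w x) -> trans_edges (H2 n) L = RHSset v w.
Proof.
move=> hP; apply/setP => e; rewrite !inE.
apply: eq_existsb => x; apply: eq_existsb => y; by rewrite hP.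
Qed.

Variables v w : V n.
Hypothesis hv : v \in N0 n.
Hypothesis hw : w \in N0 n.
Hypothesis vw : v != w.
Hypothesis hP : forall x, Pt L v w x.

Definition cyc x := cyc4 x (vadd x v) (vadd (vadd x v) w) (vadd x w).

Lemma cyc_uniq x : uniq [:: x; vadd x v; vadd (vadd x v) w; vadd x w].
Proof.
have v0 := N0_neq0 hn hv; have w0 := N0_neq0 hn hw.
rewrite /= !inE !negb_or.
rewrite ![x == _]eq_sym vadd_eq0 v0 vaddAA_eq vw vadd_eq0 w0.
rewrite [vadd x v == _]eq_sym vadd_eq0 w0 (inj_eq (@vadd_inj _ x)) vw.
by rewrite vaddAC vadd_eq0 v0.
Qed.

Lemma cyc_4cycle x : is_4cycle (H2 n) (cyc x).
Proof.
exists x, (vadd x v), (vadd (vadd x v) w), (vadd x w); split => //; first exact: cyc_uniq.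
rewrite !H2_add hv hw /= (H2_sym (vadd x w) x) H2_add hw andbT.
rewrite H2E (_ : vadd (vadd (vadd x v) w) (vadd x w) = v) //.
by vt.
Qed.

Lemma cyc_shift x y : y \in verts (cyc x) -> cyc y = cyc x.
Proof.
rewrite /cyc in_verts4 !inE; case/or4P => /eqP ->.
- by [].
- rewrite vaddK; exact: cyc4_1.
- rewrite (_ : vadd (vadd (vadd x v) w) v = vadd x w); last by vt.
  rewrite !vaddK.
  exact: cyc4_2.
- rewrite (_ : vadd (vadd x w) v = vadd (vadd x v) w); last by vt.
  rewrite (_ : vadd (vadd (vadd x v) w) w = vadd x v); last by vt.
  rewrite (_ : vadd (vadd x w) w = x); last by vt.
  exact: cyc4_3.
Qed.

Definition Fam := [set cyc x | x : V n].

Lemma edge_tr a b : tr a b -> [set a; b] \in trans_edges (H2 n) L.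
Proof. by move=> h; rewrite in_trans // H2_neq // (tr_adj h). Qed.

Lemma tiling : tiles_in_4cycles (H2 n) (trans_edges (H2 n) L).
Proof.
exists Fam; split.
- by move=> C /imsetP [x _ ->]; apply: cyc_4cycle.
- apply/setP => e; apply/idP/bigcupP.
  + rewrite inE => /existsP [a /existsP [b /andP [hab /eqP ->]]].
    exists (cyc a); first exact: imset_f.
    move: hab; rewrite hP => /orP [] /eqP E.
    * have -> : b = vadd a v by rewrite -E vaddKl.
      by rewrite /cyc in_cyc4 eqxx.
    * have -> : b = vadd a w by rewrite -E vaddKl.
      by rewrite /cyc in_cyc4 (set2C a) eqxx !orbT.
  + case=> C /imsetP [x _ ->]; rewrite /cyc in_cyc4.
    case/or4P => /eqP ->; apply: edge_tr; rewrite hP.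
    * by rewrite vaddKl eqxx.
    * by rewrite vaddKl eqxx orbT.
    * by rewrite (_ : vadd (vadd (vadd x v) w) (vadd x w) = v) ?eqxx //; vt.
    * by rewrite vaddC vaddKl eqxx orbT.
- move=> C1 C2 /imsetP [x1 _ ->] /imsetP [x2 _ ->] ne.
  have key y : y \in verts (cyc x1) -> y \in verts (cyc x2) -> False.
    move=> h1 h2; move: ne; by rewrite -(cyc_shift h1) -(cyc_shift h2) eqxx.
  split.
  + rewrite disjoint_subset; apply/subsetP => y hy; rewrite !inE; apply/negP => hy2.
    exact: key hy hy2.
  + rewrite disjoint_subset; apply/subsetP => e he; rewrite inE; apply/negP => he2.
    have [p hp] : exists p, p \in e.
      by move: he; rewrite /cyc in_cyc4 => /or4P [] /eqP ->; eexists; apply: set21.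
    have iv (C : {set {set V n}}) y : e \in C -> y \in e -> y \in verts C.
      by move=> h1 h2; rewrite /verts; apply/bigcupP; exists e.
    exact: (key p (iv _ _ he hp) (iv _ _ he2 hp)).
- move=> x.
  have -> : [set C in Fam | x \in verts C] = [set cyc x].
    apply/setP => C; rewrite !inE; apply/andP/eqP.
    * by case=> /imsetP [y _ ->] h; rewrite (cyc_shift h).
    * move=> ->; split; first exact: imset_f.
      by rewrite /cyc in_verts4 inE eqxx.
  by rewrite cards1.
Qed.

End Cond.


Lemma card_filter_sum (I T : finType) (F : {set I}) (x : T) (f : I -> {set T}) :
  #|[set C in F | x \in f C]| = \sum_(C in F) (x \in f C).
Proof.
rewrite -sum1_card (eq_bigl (fun C => (C \in F) && (x \in f C))); last by move=> C; rewrite !inE.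
by rewrite big_mkcondr /=; apply: eq_bigr => C _; case: (x \in f C).
Qed.

Lemma tiling_count (T : finType) (r : rel T) (M : {set {set T}}) :
  tiles_in_4cycles r M -> #|M| = #|T|.
Proof.
case=> F [hC hM hdisj hone].
have c4 C : C \in F -> #|C| = 4 /\ #|verts C| = 4.
  by move=> /hC [a [b [c [d [u _ ->]]]]]; apply: card_cyc4.
have triv : trivIset F.
  by apply/trivIsetP => A B hA hB ne; case: (hdisj A B hA hB ne).
have e1 : #|M| = 4 * #|F|.
  move/eqP: triv; rewrite /cover -hM => <-.
  rewrite (eq_bigr (fun _ => 4)); first by rewrite sum_nat_const mulnC.
  by move=> C /c4 [].
have e2 : #|T| = 4 * #|F|.
  transitivity (\sum_(x : T) #|[set C in F | x \in verts C]|).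
    rewrite (eq_bigr (fun _ => 1)); first by rewrite sum_nat_const muln1.
    by move=> x _; rewrite hone.
  under eq_bigr => x _ do rewrite (card_filter_sum F x (@verts T)).
  rewrite exchange_big /=.
  rewrite (eq_bigr (fun _ => 4)); first by rewrite sum_nat_const mulnC.
  move=> C hCF; have [_ <-] := c4 C hCF.
  by rewrite -sum1_card [RHS]big_mkcond /=; apply: eq_bigr => y _; case: (y \in _).
by rewrite e1 e2.
Qed.

Section Rule.
Variable n : nat.
Hypothesis hn : 3 <= n.
Variable L : {ffun V n -> 'I_4}.
Hypothesis hL : proper_col (H2 n) L.
Implicit Types x y z u v w g : V n.
Notation tr := (is_transition (H2 n) L).
Variables v w : V n.
Hypothesis hv : v \in N0 n.
Hypothesis hw : w \in N0 n.
Hypothesis vw : v != w.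
Hypothesis hP : forall x, Pt L v w x.

Lemma rule p g : g \in N0 n -> g != v -> g != w -> L (vadd p g) = L (vadd (vadd p v) w).
Proof.
move=> hg gv gw.
have tpv : tr p (vadd p v) by rewrite hP vaddKl eqxx.
have tpw : tr p (vadd p w) by rewrite hP vaddKl eqxx orbT.
have tvp : tr (vadd p v) p by rewrite tr_sym.
have twp : tr (vadd p w) p by rewrite tr_sym.
have hpg : H2 n p (vadd p g) by rewrite H2_add.
have hpw : H2 n p (vadd p w) by rewrite H2_add.
have hpv : H2 n p (vadd p v) by rewrite H2_add.
apply: (@Q4 (L p) (L (vadd p v)) (L (vadd p w))).
- exact: adjP.
- exact: adjP.
- rewrite eq_sym; apply: (trA hn tvp hpw).
  by rewrite (inj_eq (@vadd_inj _ p)) eq_sym.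
- by rewrite eq_sym; apply: (adjP hL).
- by apply: (trA hn tvp hpg); rewrite (inj_eq (@vadd_inj _ p)).
- by apply: (trA hn twp hpg); rewrite (inj_eq (@vadd_inj _ p)).
- apply: (trA hn tpw).
    rewrite H2E (_ : vadd (vadd p w) (vadd (vadd p v) w) = v) //; by vt.
  by rewrite vaddAA_eq.
- by rewrite eq_sym; apply: (adjP hL); rewrite H2_add.
- rewrite eq_sym; apply: (adjP hL).
  rewrite H2E (_ : vadd (vadd p w) (vadd (vadd p v) w) = v) //; by vt.
Qed.

End Rule.

Section Uniq.
Variable n : nat.
Hypothesis hn : 3 <= n.
Variables L1 L2 : {ffun V n -> 'I_4}.
Hypothesis hL1 : proper_col (H2 n) L1.
Hypothesis hL2 : proper_col (H2 n) L2.
Implicit Types x y z u v w g : V n.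
Variables v w : V n.
Hypothesis hv : v \in N0 n.
Hypothesis hw : w \in N0 n.
Hypothesis vw : v != w.
Hypothesis hP1 : forall x, Pt L1 v w x.
Hypothesis hP2 : forall x, Pt L2 v w x.

Definition Qa x := [/\ L1 x = L2 x, L1 (vadd x v) = L2 (vadd x v),
   L1 (vadd x w) = L2 (vadd x w) & L1 (vadd (vadd x v) w) = L2 (vadd (vadd x v) w)].

Lemma Qa_step x g : g \in N0 n -> Qa x -> Qa (vadd x g).
Proof.
move=> hg [q1 q2 q3 q4].
case: (eqVneq g v) => [->|gv].
  by split; rewrite ?vaddK.
case: (eqVneq g w) => [->|gw].
  split => //.
  - by rewrite vaddAC.
  - by rewrite vaddK.
  - by rewrite vaddAC vaddK.
have R1 := rule hn hL1 hv hw vw hP1 _ hg gv gw.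
have R2 := rule hn hL2 hv hw vw hP2 _ hg gv gw.
split.
- by rewrite R1 R2.
- rewrite vaddAC R1 R2 !vaddK //.
- rewrite vaddAC R1 R2 (_ : vadd (vadd (vadd x w) v) w = vadd x v) //; by vt.
- rewrite (_ : vadd (vadd (vadd x g) v) w = vadd (vadd (vadd x v) w) g); last by vt.
  rewrite R1 R2 (_ : vadd (vadd (vadd (vadd x v) w) v) w = x) //; by vt.
Qed.

Lemma uniq_col a : Qa a -> L1 = L2.
Proof.
move=> qa; apply/ffunP => x.
have : Qa x by apply: (reach (Q := Qa)) qa x => y g hg; apply: Qa_step.
by case.
Qed.

End Uniq.

Lemma pair_eq n (v w p q : V n) : v != w -> (p == v) || (p == w) -> (q == v) || (q == w) -> p != q ->
  forall z, ((z == v) || (z == w)) = ((z == p) || (z == q)).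
Proof.
move=> vw /orP [] /eqP -> /orP [] /eqP -> ne z; rewrite ?eqxx // in ne.
by rewrite orbC.
Qed.

Unset Implicit Arguments.

Theorem theorem5p2 (n : nat) (hn : (3 <= n)%N) (K : {ffun V n -> 'I_4})
  (hK : proper_col (H2 n) K) :
  let cond_i (L : {ffun V n -> 'I_4}) :=
    exists v w : V n, [/\ v \in N0 n, w \in N0 n, v != w &
      trans_edges (H2 n) L =
        [set e : {set V n} | [exists x : V n, exists y : V n,
           ((vadd x y == v) || (vadd x y == w)) && (e == [set x; y])]]] in
  [/\ (cond_i K <-> rb (H2 n) K = (2%:R / n.+1%:R)%R),
      (rb (H2 n) K = (2%:R / n.+1%:R)%R <-> tiles_in_4cycles (H2 n) (trans_edges (H2 n) K))
    & forall K' : {ffun V n -> 'I_4}, proper_col (H2 n) K' -> cond_i K -> cond_i K' ->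
      forall a b c d : V n, uniq [:: a; b; c; d] ->
        cyc4 a b c d \subset trans_edges (H2 n) K ->
        cyc4 a b c d \subset trans_edges (H2 n) K' ->
        K a = K' a -> K b = K' b -> K c = K' c -> K d = K' d ->
        K = K'].
Proof.
move=> cond_i.
have ci L : proper_col (H2 n) L -> cond_i L <->
    exists v w, [/\ v \in N0 n, w \in N0 n, v != w & forall x, Pt L v w x].
  move=> hL; rewrite /cond_i; split.
  - case=> v [w [hv hw vw E]]; exists v, w; split => //. exact: (@condi_good n hn L v w hv hw E).
  - case=> v [w [hv hw vw hP]]; exists v, w; split => //; exact: good_condi hP.
have rb_good : rb (H2 n) K = (2%:R / n.+1%:R)%R <->
    exists v w, [/\ v \in N0 n, w \in N0 n, v != w & forall x, Pt K v w x].
  split.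
  - move/(rb_iff hn K) => h; exact: (structure hn hK (full_hall hn hK h)).
  - case=> v [w [hv hw vw hP]]; apply/(rb_iff hn K); exact: (hall_full hn (Pt_card vw hP)).
split.
- split => h; first by apply/rb_good/(ci K hK).
  by apply/(ci K hK)/rb_good.
- split.
  + by move/rb_good => [v [w [hv hw vw hP]]]; exact: (tiling hn hv hw vw hP).
  + by move/tiling_count => h; apply/(rb_iff hn K).
move=> K' hK' /(ci K hK) [v [w [hv hw vw hP]]] /(ci K' hK') [v' [w' [hv' hw' vw' hP']]].
move=> a b c d u s1 s2 ea eb ec ed.
move: (u); rewrite /= !inE !negb_or => /andP [/and3P [ab ac ad] /andP [/andP [bc bd] /andP [cd _]]].
have da : d != a by rewrite eq_sym.
have m1 : [set a; b] \in cyc4 a b c d by rewrite in_cyc4 eqxx.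
have m2 : [set b; c] \in cyc4 a b c d by rewrite in_cyc4 eqxx orbT.
have m4 : [set d; a] \in cyc4 a b c d by rewrite in_cyc4 eqxx !orbT.
have tr1 (L : {ffun V n -> 'I_4}) : cyc4 a b c d \subset trans_edges (H2 n) L -> is_transition (H2 n) L a b.
  by move=> s; rewrite -(in_trans L ab); apply: (subsetP s).
have tr2 (L : {ffun V n -> 'I_4}) : cyc4 a b c d \subset trans_edges (H2 n) L -> is_transition (H2 n) L b c.
  by move=> s; rewrite -(in_trans L bc); apply: (subsetP s).
have tr4 (L : {ffun V n -> 'I_4}) : cyc4 a b c d \subset trans_edges (H2 n) L -> is_transition (H2 n) L d a.
  by move=> s; rewrite -(in_trans L da); apply: (subsetP s).
set p := vadd a b; set q := vadd b c.
have pq : p != q.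
  apply: contra ac => /eqP; rewrite /p /q (vaddC a b) => /vadd_inj ->.
  by rewrite eqxx.
have hb : b = vadd a p by rewrite /p vaddKl.
have hc : c = vadd (vadd a p) q by rewrite -hb /q vaddKl.
have transfer (L : {ffun V n -> 'I_4}) v1 w1 : v1 != w1 -> (forall x, Pt L v1 w1 x) ->
    cyc4 a b c d \subset trans_edges (H2 n) L ->
    (forall x, Pt L p q x) /\ d = vadd a q.
  move=> vw1 hP1 s.
  have hp : (p == v1) || (p == w1) by rewrite -hP1; apply: tr1.
  have hq : (q == v1) || (q == w1) by rewrite -hP1; apply: tr2.
  have E := pair_eq vw1 hp hq pq.
  have hPpq : forall x, Pt L p q x by move=> x y; rewrite hP1 E.
  split => //.
  have := hPpq d a; rewrite (tr4 L s) => /esym /orP [] /eqP E2.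
  - have dbe : d = b by apply: (@vadd_inj _ a); rewrite vaddC E2.
    by move: bd; rewrite dbe eqxx.
  - by rewrite -E2 vaddC vaddK.
have [hPK hdK] := transfer K v w vw hP s1.
have [hPK' _] := transfer K' v' w' vw' hP' s2.
have hpN : p \in N0 n by rewrite -H2E; apply: tr_adj (tr1 K s1).
have hqN : q \in N0 n by rewrite -H2E; apply: tr_adj (tr2 K s1).
apply: (uniq_col hn hK hK' hpN hqN pq hPK hPK' (a := a)).
split; [exact: ea | by rewrite -hb | by rewrite -hdK | by rewrite -hc].
Qed.
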